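(* Let $\mathbb{X},\mathbb{Y}$ be $n$-dimensional real polyhedral Banach spaces, $F$ a facet of $B_{\mathbb{X}}$, and $T:\mathbb{X}\to\mathbb{Y}$ a bijective linear operator that preserves Birkhoff–James orthogonality at each point of $\operatorname{Int}_r F$. Let $u\in\operatorname{Int}_r F$. Then there is a facet $G$ of $B_{\mathbb{Y}}$ such that $\frac{1}{\|Tu\|}T(\operatorname{Int}_r F)\subseteq\operatorname{Int}_r G$.
   Context: A finite-dimensional Banach space is polyhedral if its closed unit ball has finitely many extreme points. A convex subset $F$ of a convex set $G$ is a face of $G$ if whenever $a,b\in G$, $0<t<1$, $(1-t)a+tb\in F$, then $a,b\in F$; its dimension is $\dim\operatorname{span}\{a-b:a,b\in F\}$; a facet is a maximal proper face (for an $n$-dimensional polyhedral space, an $(n-1)$-dimensional face of the unit ball). $\operatorname{aff}(D)$ is the affine hull of $D$, and $\operatorname{Int}_r D=\{x\in D:\exists\varepsilon>0,\ B(x,\varepsilon)\cap\operatorname{aff}(D)\subseteq D\}$ is the relative interior. $u\perp_B v$ means $\|u+\lambda v\|\ge\|u\|$ for all real $\lambda$; $T$ preserves Birkhoff–James orthogonality at $x$ if $x\perp_B w\Rightarrow Tx\perp_B Tw$ for all $w$. *)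

(* Defs.v *)
(* finite-dimensional real normed spaces modelled as 'rV[R]_n
   equipped with an arbitrary norm function. *)
From HB Require Import structures.
From mathcomp Require Import all_boot all_order all_algebra.
From mathcomp Require Import classical_sets cardinality reals.
Set Implicit Arguments. Unset Strict Implicit. Unset Printing Implicit Defensive.
Import Order.TTheory GRing.Theory Num.Theory.
Local Open Scope ring_scope.
Local Open Scope classical_set_scope.

Section Defs.
Variables (R : realType) (n : nat).
Notation V := 'rV[R]_n.

Definition is_norm (N : V -> R) : Prop :=
  [/\ forall x, N x = 0 -> x = 0,
      forall (a : R) x, N (a *: x) = `|a| * N x &
      forall x y, N (x + y) <= N x + N y].

Definition unit_ball (N : V -> R) : set V := [set x | N x <= 1].

Definition convex_set (C : set V) : Prop :=
  forall a b (t : R), C a -> C b -> 0 <= t <= 1 -> C ((1 - t) *: a + t *: b).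

Definition is_face (G F : set V) : Prop :=
  [/\ F `<=` G, convex_set F &
      forall a b (t : R), G a -> G b -> 0 < t < 1 ->
        F ((1 - t) *: a + t *: b) -> F a /\ F b].

Definition extreme_point (G : set V) (x : V) : Prop := is_face G [set x].

Definition is_facet (G F : set V) : Prop :=
  [/\ is_face G F, F <> G &
      forall F', is_face G F' -> F' <> G -> F `<=` F' -> F' = F].

Definition polyhedral (N : V -> R) : Prop :=
  finite_set [set x | extreme_point (unit_ball N) x].

Definition aff (D : set V) : set V :=
  [set x | exists (m : nat) (c : 'I_m -> R) (p : 'I_m -> V),
     [/\ forall i, D (p i), \sum_(i < m) c i = 1 & x = \sum_(i < m) c i *: p i]].

Definition relint (N : V -> R) (D : set V) : set V :=
  [set x | D x /\ exists2 e : R, 0 < e &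
     forall y, N (y - x) < e -> aff D y -> D y].

Definition bj_orth (N : V -> R) (u v : V) : Prop :=
  forall l : R, N u <= N (u + l *: v).

Definition preserves_bj_at (NX NY : V -> R) (T : V -> V) (x : V) : Prop :=
  forall w, bj_orth NX x w -> bj_orth NY (T x) (T w).

End Defs.

(* Main.v *)
Require Import Defs.
From HB Require Import structures.
From mathcomp Require Import all_boot all_order all_algebra.
From mathcomp Require Import boolp classical_sets cardinality reals.
From mathcomp Require Import ring lra zify.
Import Order.TTheory GRing.Theory Num.Theory.
Local Open Scope ring_scope.
Local Open Scope classical_set_scope.
Set Implicit Arguments. Unset Strict Implicit. Unset Printing Implicit Defensive.


Section Norm.
Variables (R : realType) (n : nat).
Notation V := 'rV[R]_n.
Variables (N : V -> R) (N0x : forall x, N x = 0 -> x = 0)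
  (NZ : forall (a : R) x, N (a *: x) = `|a| * N x)
  (ND : forall x y, N (x + y) <= N x + N y).

Lemma N0 : N 0 = 0.
Proof. by rewrite -(scale0r 0) NZ normr0 mul0r. Qed.

Lemma NN x : N (- x) = N x.
Proof. by rewrite -scaleN1r NZ normrN normr1 mul1r. Qed.

Lemma Nge0 x : 0 <= N x.
Proof. have := ND x (- x); rewrite subrr N0 NN => h. lra. Qed.

Lemma NB x y : N (x - y) = N (y - x).
Proof. by rewrite -NN opprB. Qed.

Lemma Ngt0 x : x != 0 -> 0 < N x.
Proof.
move=> hx; rewrite lt_neqAle Nge0 andbT; apply/eqP => h.
by move: hx; rewrite (N0x (esym h)) eqxx.
Qed.

Lemma NZp a x : 0 <= a -> N (a *: x) = a * N x.
Proof. by move=> ha; rewrite NZ ger0_norm. Qed.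

Lemma Nsub x y : N x <= N y + N (x - y).
Proof. by have := ND y (x - y); rewrite addrC subrK. Qed.

Lemma NDl x y : N x - N y <= N (x + y).
Proof. have := Nsub x (x + y); rewrite opprD addrA subrr add0r NN. lra. Qed.

Lemma Nconv a b (t : R) : 0 <= t <= 1 ->
  N ((1 - t) *: a + t *: b) <= (1 - t) * N a + t * N b.
Proof.
case/andP=> t0 t1; apply: le_trans (ND _ _) _.
by rewrite !NZp // subr_ge0.
Qed.

Lemma ball_convex : convex_set (unit_ball N).
Proof.
move=> a b t; rewrite /unit_ball /= => ha hb ht.
apply: le_trans (Nconv _ _ ht) _.
case/andP: ht => t0 t1.
have : (1 - t) * N a <= (1 - t) * 1 by rewrite ler_wpM2l // subr_ge0.
have : t * N b <= t * 1 by rewrite ler_wpM2l.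
lra.
Qed.

Lemma face_lt1 (G : set V) p : is_face (unit_ball N) G -> G p -> N p < 1 ->
  G = unit_ball N.
Proof.
case=> sGB _ hG Gp Np; apply/seteqP; split => // a Ba.
pose s := (1 - N p) / 2.
have s0 : 0 < s by rewrite /s divr_gt0 // subr_gt0.
pose b := p + s *: (p - a).
have Bb : unit_ball N b.
  rewrite /unit_ball /b /=; apply: le_trans (ND _ _) _.
  rewrite NZp ?ltW //.
  have h1 : N (p - a) <= N p + N a by rewrite -NN opprB addrC (le_trans (ND _ _)) // NN.
  have h2 := ler_wpM2l (ltW s0) h1.
  have : N a <= 1 := Ba. have := Nge0 p. move: h2. rewrite /s. nra.
have t0 : 0 < s / (1 + s) < 1.
  apply/andP; split; first by rewrite divr_gt0 // addr_gt0.
  by rewrite ltr_pdivrMr ?addr_gt0 // mul1r ltrDr.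
have := hG b a (s / (1 + s)) Bb Ba t0.
have -> : (1 - s / (1 + s)) *: b + s / (1 + s) *: a = p.
  have h1 : 1 + s != 0 by rewrite gt_eqF // addr_gt0.
  by apply/rowP => j; rewrite /b !mxE; field.
by move=> /(_ Gp) [].
Qed.

End Norm.


Section Faces.
Variables (R : realType) (n : nat).
Notation V := 'rV[R]_n.
Variables (N : V -> R) (N0x : forall x, N x = 0 -> x = 0)
  (NZ : forall (a : R) x, N (a *: x) = `|a| * N x)
  (ND : forall x y, N (x + y) <= N x + N y).
Notation B := (unit_ball N).

Lemma Bconv a b t : N a <= 1 -> N b <= 1 -> 0 <= t <= 1 ->
  N ((1 - t) *: a + t *: b) <= 1.
Proof. move=> ha hb ht; exact: (ball_convex NZ ND ha hb ht). Qed.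

Lemma seg x w s s' : N x <= 1 -> N (x + s *: w) <= 1 -> 0 <= s' <= s ->
  N (x + s' *: w) <= 1.
Proof.
move=> hx hs /andP[s0 ss].
have [->|s'0] := eqVneq s' 0; first by rewrite scale0r addr0.
have sp : 0 < s by apply: lt_le_trans ss; rewrite lt_neqAle eq_sym s'0 s0.
have -> : x + s' *: w = (1 - s' / s) *: x + (s' / s) *: (x + s *: w).
  by apply/rowP => j; rewrite !mxE; field; rewrite gt_eqF.
apply: Bconv => //; apply/andP; split; first by rewrite divr_ge0 // ltW.
by rewrite ler_pdivrMr // mul1r.
Qed.

Definition Phi (y : V) : set V :=
  [set z | N z <= 1 /\ exists2 s : R, 0 < s & N (y + s *: (y - z)) <= 1].

Lemma Phi_self y : N y <= 1 -> Phi y y.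
Proof. by move=> hy; split => //; exists 1 => //; rewrite subrr scaler0 addr0. Qed.

Lemma Phi_sub y : Phi y `<=` B.
Proof. by move=> z []. Qed.

Lemma Phi_face_l y a b t : N y <= 1 -> N a <= 1 -> N b <= 1 -> 0 < t < 1 ->
  Phi y ((1 - t) *: a + t *: b) -> Phi y a.
Proof.
move=> hy ha hb /andP[t0 t1] [_ [s s0 hs]]; split => //.
have st0 : 0 < s * t by rewrite mulr_gt0.
exists (s * (1 - t) / (1 + s * t)).
  by rewrite divr_gt0 ?addr_gt0 // mulr_gt0 // subr_gt0.
have -> : y + s * (1 - t) / (1 + s * t) *: (y - a) =
   (1 - (s * t) / (1 + s * t)) *: (y + s *: (y - ((1 - t) *: a + t *: b)))
   + (s * t) / (1 + s * t) *: b.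
  apply/rowP => j; rewrite !mxE; field.
  by rewrite gt_eqF // addr_gt0.
apply: Bconv => //; apply/andP; split; first by rewrite divr_ge0 // ltW // addr_gt0.
by rewrite ler_pdivrMr ?addr_gt0 // mul1r lerDr.
Qed.

Lemma Phi_face y : N y <= 1 -> is_face B (Phi y).
Proof.
move=> hy; split; first exact: Phi_sub.
- move=> a b t [ha [s1 s10 h1]] [hb [s2 s20 h2]] ht; split; first exact: Bconv.
  exists (Num.min s1 s2); first by rewrite lt_min s10 s20.
  have e1 : N (y + Num.min s1 s2 *: (y - a)) <= 1.
    by apply: (seg hy h1); rewrite ge_min lexx ltW //= lt_min s10 s20.
  have e2 : N (y + Num.min s1 s2 *: (y - b)) <= 1.
    by apply: (seg hy h2); rewrite ge_min lexx orbT ltW //= lt_min s10 s20.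
  have := Bconv e1 e2 ht.
  suff -> : (1 - t) *: (y + Num.min s1 s2 *: (y - a)) + t *: (y + Num.min s1 s2 *: (y - b))
    = y + Num.min s1 s2 *: (y - ((1 - t) *: a + t *: b)) by [].
  by apply/rowP => j; rewrite !mxE; ring.
- move=> a b t ha hb ht hP; split; first exact: Phi_face_l hP.
  apply: (@Phi_face_l y b a (1 - t)) => //.
    by case/andP: ht => t0 t1; apply/andP; split; lra.
  suff -> : (1 - (1 - t)) *: b + (1 - t) *: a = (1 - t) *: a + t *: b by [].
  by apply/rowP => j; rewrite !mxE; ring.
Qed.

Lemma Phi_proper y : N y = 1 -> Phi y <> B.
Proof.
move=> hy hP; have : B 0 by rewrite /unit_ball /= N0 //.
rewrite -hP => -[_ [s s0]]; rewrite subr0 -{1}(scale1r y) -scalerDl (NZp NZ).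
  by rewrite hy mulr1; lra.
by rewrite addr_ge0 // ltW.
Qed.

Lemma face_contains (F G : set V) a r : F `<=` B -> is_face B G -> G a -> F a ->
  0 < r -> (forall z, N (z - a) < r -> aff F z -> F z) -> F `<=` G.
Proof.
move=> FB [GB _ hG] Ga Fa r0 hr f Ff.
have Nf : N (a - f) <= 2.
  apply: le_trans (ND _ _) _; rewrite NN //.
  have := FB _ Fa; have := FB _ Ff; rewrite /unit_ball /=; lra.
pose s := r / 4.
have s0 : 0 < s by rewrite divr_gt0.
pose z := a + s *: (a - f).
have Fz : F z.
  apply: hr.
    rewrite /z addrC addKr NZp ?ltW //.
    have : s * N (a - f) <= s * 2 by rewrite ler_wpM2l // ltW.
    rewrite /s; lra.
  exists 2%N, [ffun i : 'I_2 => if i == ord0 then 1 + s else - s],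
      [ffun i : 'I_2 => if i == ord0 then a else f]; split.
  - by move=> i; rewrite ffunE; case: ifP.
  - by rewrite big_ord_recr big_ord1 /= !ffunE /=; ring.
  - rewrite big_ord_recr big_ord1 /= !ffunE /=.
    by apply/rowP => j; rewrite /z !mxE; ring.
have t0 : 0 < s / (1 + s) < 1.
  apply/andP; split; first by rewrite divr_gt0 // addr_gt0.
  by rewrite ltr_pdivrMr ?addr_gt0 // mul1r ltrDr.
have := hG z f (s / (1 + s)) (FB _ Fz) (FB _ Ff) t0.
have -> : (1 - s / (1 + s)) *: z + s / (1 + s) *: f = a.
  have h1 : 1 + s != 0 by rewrite gt_eqF // addr_gt0.
  by apply/rowP => j; rewrite /z !mxE; field.
by move=> /(_ Ga) [].
Qed.

End Faces.


Section VS.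
Variables (R : realType) (n : nat).
Notation V := 'rV[R]_n.

Lemma dim_lt (U1 U : {vspace V}) w : (U1 <= U)%VS -> w \in U -> w \notin U1 ->
  (\dim U1 < \dim U)%N.
Proof.
move=> sU wU wU1; have [le eq] := dimv_leqif_sup sU.
rewrite ltn_neqAle le andbT eq; apply/negP => /subvP h.
by move: wU1; rewrite h.
Qed.

Lemma vspace_of (P : V -> Prop) : P 0 -> (forall v w, P v -> P w -> P (v + w)) ->
  (forall k v, P v -> P (k *: v)) -> exists U : {vspace V}, forall v, v \in U <-> P v.
Proof.
move=> P0 PD PZ.
suff: forall m (U : {vspace V}), (forall v, v \in U -> P v) ->
    (\dim (fullv : {vspace V}) - \dim U <= m)%N -> exists U' : {vspace V}, forall v, v \in U' <-> P v.
  move=> /(_ (\dim (fullv : {vspace V})) 0%VS); apply; last by rewrite leq_subr.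
  by move=> v; rewrite memv0 => /eqP ->.
elim=> [|m IH] U hU hm.
all: case: (pselect (exists v, P v /\ v \notin U)) => [[v [Pv vU]]|nex];
  last by exists U => v; split; [exact: hU | move=> Pv; apply/negPn/negP => vU; apply: nex; exists v].
all: pose U' := (U + <[v]>)%VS.
all: have hU' : forall w, w \in U' -> P w by
    move=> w /memv_addP [a aU [b /vlineP [k ->] ->]]; apply: PD; [exact: hU | exact: PZ].
all: have sUU' : (U <= U')%VS by exact: addvSl.
all: have vU' : v \in U' by rewrite -[v]add0r; apply: memv_add (mem0v _) (memv_line v).
all: have lt := dim_lt sUU' vU' vU.
all: have le := dimvS (subvf U').
- lia.
- apply: (IH U') => //; lia.
Qed.
End VS.

Section KM.
Variables (R : realType) (n : nat).
Notation V := 'rV[R]_n.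
Variables (N : V -> R) (N0x : forall x, N x = 0 -> x = 0)
  (NZ : forall (a : R) x, N (a *: x) = `|a| * N x)
  (ND : forall x y, N (x + y) <= N x + N y).
Notation B := (unit_ball N).

Lemma tA (t : R) : 0 < t < 1 -> 0 <= t < 1.
Proof. by case/andP=> ? ?; apply/andP; split => //; exact: ltW. Qed.
Lemma tB (t : R) : 0 < t < 1 -> 0 <= 1 - t < 1.
Proof. by case/andP=> ? ?; apply/andP; split; lra. Qed.
Lemma tC (t : R) : 0 < t < 1 -> 0 <= t <= 1.
Proof. by case/andP=> ? ?; apply/andP; split; lra. Qed.

Definition conv_of (S : set V) (x : V) := exists s : seq (R * V),
  [/\ forall q, q \in s -> 0 <= q.1 /\ S q.2, \sum_(q <- s) q.1 = 1 &
      x = \sum_(q <- s) q.1 *: q.2].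

Lemma conv_comb S a b t : conv_of S a -> conv_of S b -> 0 <= t <= 1 ->
  conv_of S ((1 - t) *: a + t *: b).
Proof.
move=> [sa [ha1 ha2 ha3]] [sb [hb1 hb2 hb3]] /andP[t0 t1].
exists ([seq ((1 - t) * q.1, q.2) | q <- sa] ++ [seq (t * q.1, q.2) | q <- sb]); split.
- move=> q; rewrite mem_cat => /orP[] /mapP [q' q'i ->] /=.
    by have [h1 h2] := ha1 _ q'i; split => //; rewrite mulr_ge0 // subr_ge0.
  by have [h1 h2] := hb1 _ q'i; split => //; rewrite mulr_ge0.
- by rewrite big_cat !big_map /= -!mulr_sumr ha2 hb2; ring.
- rewrite big_cat !big_map /= ha3 hb3 !scaler_sumr; congr (_ + _);
  by apply: eq_bigr => q _; rewrite scalerA.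
Qed.

Definition Ldir x w := exists2 e : R, 0 < e & forall c, `|c| <= e -> N (x + c *: w) <= 1.

Lemma Ldir_space x : N x <= 1 -> exists U : {vspace V}, forall v, v \in U <-> Ldir x v.
Proof.
move=> hx; apply: vspace_of.
- by exists 1 => // c _; rewrite scaler0 addr0.
- move=> v w [e1 e10 h1] [e2 e20 h2].
  exists (Num.min e1 e2 / 2); first by rewrite divr_gt0 // lt_min e10 e20.
  move=> c hc.
  have hm1 : Num.min e1 e2 <= e1 by rewrite ge_min lexx.
  have hm2 : Num.min e1 e2 <= e2 by rewrite ge_min lexx orbT.
  have c1 : `|2 * c| <= e1 by rewrite normrM ger0_norm //; lra.
  have c2 : `|2 * c| <= e2 by rewrite normrM ger0_norm //; lra.
  have := Bconv NZ ND (h1 _ c1) (h2 _ c2) (_ : 0 <= 1/2 <= 1) => /(_ ltac:(apply/andP; split; lra)).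
  suff -> : (1 - 1/2) *: (x + (2 * c) *: v) + 1/2 *: (x + (2 * c) *: w) = x + c *: (v + w) by [].
  by apply/rowP => j; rewrite !mxE; field.
- move=> k v [e e0 h]; exists (e / (`|k| + 1)); first by rewrite divr_gt0 // ltr_wpDl.
  move=> c hc; rewrite scalerA; apply: h; rewrite normrM.
  have hk : 0 < `|k| + 1 by rewrite ltr_wpDl.
  rewrite ler_pdivlMr // in hc.
  have := normr_ge0 c; have := normr_ge0 k; nra.
Qed.

Lemma Ldir_seg a b t : N a <= 1 -> N b <= 1 -> 0 < t < 1 ->
  Ldir ((1 - t) *: a + t *: b) (a - ((1 - t) *: a + t *: b)).
Proof.
move=> ha hb /andP[t0 t1].
have hx : N ((1 - t) *: a + t *: b) <= 1 by apply: Bconv => //; lra.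
exists (Num.min 1 ((1 - t) / t)); first by rewrite lt_min ltr01 divr_gt0 // subr_gt0.
move=> c hc; have hc1 : `|c| <= 1 by apply: le_trans hc _; rewrite ge_min lexx.
have hc2 : `|c| <= (1 - t) / t by apply: le_trans hc _; rewrite ge_min lexx orbT.
have [c0|c0] := leP 0 c.
- rewrite ger0_norm // in hc1.
  have := Bconv NZ ND hx ha (_ : 0 <= c <= 1) => /(_ ltac:(apply/andP; split => //)).
  suff -> : (1 - c) *: ((1 - t) *: a + t *: b) + c *: a =
    (1 - t) *: a + t *: b + c *: (a - ((1 - t) *: a + t *: b)) by [].
  by apply/rowP => j; rewrite !mxE; ring.
- rewrite ltr0_norm // ler_pdivlMr // in hc2.
  have hd : 0 <= - c * t / (1 - t) <= 1.
    apply/andP; split; first by rewrite divr_ge0 ?mulr_ge0 //; lra.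
    by rewrite ler_pdivrMr ?subr_gt0 //; lra.
  have := Bconv NZ ND hx hb hd.
  suff -> : (1 - - c * t / (1 - t)) *: ((1 - t) *: a + t *: b) + - c * t / (1 - t) *: b =
    (1 - t) *: a + t *: b + c *: (a - ((1 - t) *: a + t *: b)) by [].
  have ht : 1 - t != 0 by rewrite subr_eq0 eq_sym lt_eqF.
  by apply/rowP => j; rewrite !mxE; field.
Qed.

Lemma Ldir_ext x : N x <= 1 -> (forall w, Ldir x w -> w = 0) -> extreme_point B x.
Proof.
move=> hx h; split.
- by move=> y ->.
- by move=> a b t -> -> _; apply/rowP => j; rewrite !mxE; ring.
- move=> a b t ha hb ht hxe; rewrite /= in hxe.
  have := Ldir_seg ha hb ht; rewrite hxe => /h /eqP; rewrite subr_eq0 => /eqP ha'.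
  split => //.
  have ht' : 0 < 1 - t < 1 by case/andP: ht => ? ?; apply/andP; split; lra.
  have := Ldir_seg hb ha ht'.
  have -> : (1 - (1 - t)) *: b + (1 - t) *: a = x.
    by rewrite -hxe; apply/rowP => j; rewrite !mxE; ring.
  by move=> /h /eqP; rewrite subr_eq0 => /eqP.
Qed.

Lemma line_max x w : N x <= 1 -> w != 0 -> exists s, [/\ 0 <= s, N (x + s *: w) <= 1,
  (forall s', 0 <= s' -> N (x + s' *: w) <= 1 -> s' <= s) &
  (forall s', s < s' -> 1 < N (x + s' *: w))].
Proof.
move=> hx wn0; have Nw := Ngt0 N0x NZ ND wn0.
pose S := [set s : R | 0 <= s /\ N (x + s *: w) <= 1].
have S0 : S 0 by split => //; rewrite scale0r addr0.
have hS : has_sup S.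
  split; first by exists 0.
  exists ((1 + N x) / N w) => s [s0 hs]; rewrite ler_pdivlMr //.
  have := Nsub ND (s *: w) (x + s *: w).
  have -> : s *: w - (x + s *: w) = - x by apply/rowP => j; rewrite !mxE; ring.
  rewrite (NN NZ) (NZp NZ) //.
  lra.
have ub := sup_upper_bound hS.
have s0 : 0 <= sup S by exact: ub.
exists (sup S); split => //.
- apply/ler_addgt0Pr => d d0.
  have [e [e0 he] lte] := sup_adherent (divr_gt0 d0 Nw) hS.
  have ee : e <= sup S by exact: ub.
  have := ND (x + e *: w) ((sup S - e) *: w); rewrite (NZp NZ) ?subr_ge0 //.
  have -> : x + e *: w + (sup S - e) *: w = x + sup S *: w.
    by apply/rowP => j; rewrite !mxE; ring.
  rewrite ltrBlDr -ltrBlDl in lte.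
  have : (sup S - e) * N w <= d / N w * N w by rewrite ler_wpM2r // ?ltW.
  rewrite divfK ?gt_eqF //; lra.
- by move=> s' s'0 hs'; apply: ub.
- move=> s' lt; rewrite ltNge; apply/negP => hs'.
  have : s' <= sup S by apply: ub; split => //; apply: le_trans (ltW lt).
  by rewrite leNgt lt.
Qed.

Lemma Ldir_mono a b x t v : N b <= 1 -> 0 <= t < 1 -> x = (1 - t) *: a + t *: b ->
  Ldir a v -> Ldir x v.
Proof.
move=> hb /andP[t0 t1] -> [e e0 h]; exists ((1 - t) * e); first by rewrite mulr_gt0 // subr_gt0.
move=> c hc.
have ht : 0 < 1 - t by rewrite subr_gt0.
have hc' : `|c / (1 - t)| <= e by rewrite normrM normfV (gtr0_norm ht) ler_pdivrMr // mulrC.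
have := Bconv NZ ND (h _ hc') hb (_ : 0 <= t <= 1) => /(_ ltac:(apply/andP; split => //; lra)).
suff -> : (1 - t) *: (a + c / (1 - t) *: v) + t *: b = (1 - t) *: a + t *: b + c *: v by [].
by apply/rowP => j; rewrite !mxE; field; rewrite gt_eqF.
Qed.

Lemma KM_ind k : forall x, N x <= 1 ->
  (exists U : {vspace V}, (forall w, w \in U <-> Ldir x w) /\ (\dim U <= k)%N) ->
  conv_of (extreme_point B) x.
Proof.
elim: k => [|k IH] x hx [U [hU hk]].
all: case: (pselect (exists w, Ldir x w /\ w != 0)) => [[w [Lw wn0]]|nex];
  last by exists [:: (1, x)]; split;
    [ move=> q; rewrite inE => /eqP -> /=; split => //; apply: Ldir_ext => // w Lw;
      apply/eqP/negPn/negP => wn0; apply: nex; exists w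
    | by rewrite big_seq1
    | by rewrite big_seq1 scale1r ].
- have : w \in U by apply/hU.
  have : U = 0%VS by apply/eqP; rewrite -dimv_eq0; lia.
  by move=> ->; rewrite memv0 (negPf wn0).
- have [e e0 he] := Lw.
  have [s1 [s10 hs1 ub1 gt1]] := line_max hx wn0.
  have wn0' : - w != 0 by rewrite oppr_eq0.
  have [s2 [s20 hs2 ub2 gt2]] := line_max hx wn0'.
  have es1 : e <= s1 by apply: ub1; [exact: ltW | apply: he; rewrite ger0_norm // ltW].
  have es2 : e <= s2.
    by apply: ub2; [exact: ltW | rewrite scalerN -scaleNr; apply: he; rewrite normrN ger0_norm // ltW].
  have s1p : 0 < s1 by apply: lt_le_trans e0 es1.
  have s2p : 0 < s2 by apply: lt_le_trans e0 es2.
  have hS : 0 < s1 + s2 by rewrite addr_gt0.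
  pose y1 := x + s1 *: w; pose y2 := x + s2 *: - w.
  pose t := s1 / (s1 + s2).
  have t01 : 0 < t < 1.
    apply/andP; split; first by rewrite divr_gt0.
    by rewrite ltr_pdivrMr // mul1r ltrDl.
  have ex1 : x = (1 - t) *: y1 + t *: y2.
    by apply/rowP => j; rewrite !mxE /t; field; rewrite gt_eqF.
  have ex2 : x = (1 - (1 - t)) *: y2 + (1 - t) *: y1.
    by rewrite ex1; apply/rowP => j; rewrite !mxE; ring.
  have [U1 hU1] := Ldir_space hs1.
  have [U2 hU2] := Ldir_space hs2.
  have sub1 : (U1 <= U)%VS.
    apply/subvP => v /hU1 L1; apply/hU; exact: (Ldir_mono hs2 (tA t01) ex1 L1).
  have sub2 : (U2 <= U)%VS.
    apply/subvP => v /hU2 L2; apply/hU; exact: (Ldir_mono hs1 (tB t01) ex2 L2).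
  have wU : w \in U by apply/hU.
  have wU1 : w \notin U1.
    apply/negP => /hU1 [e' e'0 h']; have hn : `|e'| <= e' by rewrite ger0_norm // ltW.
    have := h' e' hn.
    have -> : y1 + e' *: w = x + (s1 + e') *: w by apply/rowP => j; rewrite !mxE; ring.
    by move=> h1; have := gt1 (s1 + e'); rewrite ltrDl e'0 ltNge h1 => /(_ isT).
  have wU2 : w \notin U2.
    apply/negP => /hU2 [e' e'0 h']; have hn : `|- e'| <= e' by rewrite normrN ger0_norm // ltW.
    have := h' (- e') hn.
    have -> : y2 + - e' *: w = x + (s2 + e') *: - w by apply/rowP => j; rewrite !mxE; ring.
    by move=> h1; have := gt2 (s2 + e'); rewrite ltrDl e'0 ltNge h1 => /(_ isT).
  have d1 := dim_lt sub1 wU wU1.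
  have d2 := dim_lt sub2 wU wU2.
  rewrite ex1; apply: conv_comb.
  + apply: IH; first exact: hs1.
    by exists U1; split => //; rewrite -ltnS (leq_trans d1 hk).
  + apply: IH; first exact: hs2.
    by exists U2; split => //; rewrite -ltnS (leq_trans d2 hk).
  + exact: tC.
Qed.

Lemma KM x : N x <= 1 -> conv_of (extreme_point B) x.
Proof.
move=> hx; have [U hU] := Ldir_space hx.
by apply: (KM_ind (k := \dim U)) => //; exists U.
Qed.

End KM.


Section Sums.
Variables (R : realType) (n : nat).
Notation V := 'rV[R]_n.

Lemma psum_seq0 (T : eqType) (s : seq T) (f : T -> R) : (forall q, q \in s -> 0 <= f q) ->
  \sum_(q <- s) f q = 0 -> forall q, q \in s -> f q = 0.
Proof.
elim: s => [|x s IH] hs //; rewrite big_cons => h q.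
have hs' : forall q', q' \in s -> 0 <= f q' by move=> q' qs; apply: hs; rewrite inE qs orbT.
have hx : 0 <= f x by apply: hs; rewrite mem_head.
have hS : 0 <= \sum_(q <- s) f q by rewrite big_seq; apply: sumr_ge0.
move/eqP: h; rewrite paddr_eq0 // => /andP[/eqP h1 /eqP h2].
by rewrite inE => /orP[/eqP ->//|qs]; apply: IH.
Qed.

Lemma conv_seq (C : set V) (s : seq (R * V)) : convex_set C ->
  (forall q, q \in s -> 0 <= q.1 /\ C q.2) -> 0 < \sum_(q <- s) q.1 ->
  C ((\sum_(q <- s) q.1)^-1 *: \sum_(q <- s) q.1 *: q.2).
Proof.
move=> cC; elim: s => [|q s IH] hs.
  by rewrite big_nil ltxx.
rewrite !big_cons.
have [q0 Cq] := hs q (mem_head _ _).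
have hs' : forall q', q' \in s -> 0 <= q'.1 /\ C q'.2 by move=> q' qs; apply: hs; rewrite inE qs orbT.
have W0 : 0 <= \sum_(q <- s) q.1.
  by rewrite big_seq; apply: sumr_ge0 => q' qs; case: (hs' q' qs).
case: (eqVneq (\sum_(q <- s) q.1) 0) => [W'0|W'n0] hW.
- have z : \sum_(q' <- s) q'.1 *: q'.2 = 0.
    rewrite big1_seq // => q' /andP[_ q's].
    rewrite (psum_seq0 _ W'0 q's) ?scale0r // => i iin; by case: (hs' i iin).
  rewrite W'0 z addr0 addr0 scalerA mulVf ?scale1r //.
  by rewrite W'0 addr0 in hW; rewrite gt_eqF.
- have W'p : 0 < \sum_(q <- s) q.1 by rewrite lt_neqAle eq_sym W'n0 W0.
  have := IH hs' W'p => hC.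
  pose W := q.1 + \sum_(q <- s) q.1.
  pose t := q.1 / W.
  have Wp : 0 < W by rewrite /W ltr_wpDl.
  have ht : 0 <= t <= 1.
    apply/andP; split; first by rewrite divr_ge0 // ltW.
    by rewrite ler_pdivrMr // mul1r lerDl.
  have := cC _ _ t hC Cq ht.
  suff -> : (1 - t) *: ((\sum_(q0 <- s) q0.1)^-1 *: \sum_(q0 <- s) q0.1 *: q0.2) + t *: q.2 =
     W^-1 *: (q.1 *: q.2 + \sum_(q0 <- s) q0.1 *: q0.2) by [].
  rewrite /t /W; move: (\sum_(q0 <- s) q0.1 *: q0.2) => v.
  apply/rowP => j; rewrite !mxE; field.
  by apply/andP; split; rewrite gt_eqF.
Qed.

Lemma N_sum (N : V -> R) (ND : forall x y, N (x + y) <= N x + N y)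
  (NZ : forall (a : R) x, N (a *: x) = `|a| * N x) (s : seq (R * V)) (P : pred (R * V)) g :
  (forall q, q \in s -> 0 <= q.1) ->
  N (\sum_(q <- s | P q) q.1 *: g q) <= \sum_(q <- s | P q) q.1 * N (g q).
Proof.
elim: s => [|q s IH] hs; first by rewrite !big_nil N0.
have hs' : forall q', q' \in s -> 0 <= q'.1 by move=> q' qs; apply: hs; rewrite inE qs orbT.
rewrite !big_cons; case: (P q); last exact: IH.
apply: le_trans (ND _ _) _; apply: lerD; last exact: IH.
by rewrite NZp // hs // mem_head.
Qed.

Lemma fin_gap (S : set V) (f : V -> R) : finite_set S -> (forall e, S e -> f e < 1) ->
  exists2 g : R, 0 < g & forall e, S e -> f e <= 1 - g.
Proof.
move=> /finite_seqP [s ->] {S}; elim: s => [|x s IH] h.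
  by exists 1 => // e.
have h' : forall e, [set` s] e -> f e < 1 by move=> e es; apply: h; rewrite /= inE es orbT.
have [g g0 hg] := IH h'.
have hx : f x < 1 by apply: h; rewrite /= mem_head.
exists (Num.min g (1 - f x)); first by rewrite lt_min g0 subr_gt0.
move=> e; rewrite /= inE => /orP[/eqP ->|es].
  by rewrite lerBrDr -lerBrDl ge_min lexx orbT.
by apply: le_trans (hg _ es) _; rewrite lerB // ge_min lexx.
Qed.

Lemma fin_bound (S : set V) (f : V -> R) : finite_set S ->
  exists C : R, forall e, S e -> f e <= C.
Proof.
move=> /finite_seqP [s ->] {S}; elim: s => [|x s IH].
  by exists 0 => e.
have [C hC] := IH; exists (Num.max C (f x)) => e; rewrite /= inE => /orP[/eqP ->|es].
  by rewrite le_max lexx orbT.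
by apply: le_trans (hC _ es) _; rewrite le_max lexx.
Qed.

End Sums.


Lemma sum_split (T : eqType) (M : nmodType) (s : seq T) (P : pred T) (f : T -> M) :
  \sum_(q <- s) f q = \sum_(q <- filter P s) f q + \sum_(q <- filter (predC P) s) f q.
Proof. by rewrite -big_cat; apply: perm_big; rewrite perm_sym perm_filterC. Qed.

Lemma sum_aff (R : realType) (n : nat) (s : seq (R * 'rV[R]_n)) a b u :
  \sum_(q <- s) q.1 *: (a *: u + b *: q.2) =
  ((\sum_(q <- s) q.1) * a) *: u + b *: \sum_(q <- s) q.1 *: q.2.
Proof.
elim: s => [|q s IH]; first by rewrite !big_nil mul0r !scale0r scaler0 addr0.
rewrite !big_cons IH; move: (\sum_(q <- s) q.1) (\sum_(q <- s) q.1 *: q.2) => c v.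
by apply/rowP => j; rewrite !mxE; ring.
Qed.

Lemma vec_split (R : realType) (n : nat) (X Y : 'rV[R]_n) L : L != 0 -> 1 - L != 0 ->
  X + Y = (1 - L) *: ((1 - L)^-1 *: X) + L *: (L^-1 *: Y).
Proof. by move=> h1 h2; apply/rowP => j; rewrite !mxE; field; rewrite h1 h2. Qed.

Section SL.
Variables (R : realType) (n : nat).
Notation V := 'rV[R]_n.
Variables (N : V -> R) (N0x : forall x, N x = 0 -> x = 0)
  (NZ : forall (a : R) x, N (a *: x) = `|a| * N x)
  (ND : forall x y, N (x + y) <= N x + N y).
Notation B := (unit_ball N).
Variables (pN : polyhedral N) (F : set V) (hF : is_facet B F) (u : V) (hu : relint N F u).

Lemma FB : F `<=` B. Proof. by case: hF => -[]. Qed.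
Lemma Fconv : convex_set F. Proof. by case: hF => -[]. Qed.
Lemma Fu : F u. Proof. by case: hu. Qed.

Lemma F1 f : F f -> N f = 1.
Proof.
move=> Ff; apply/eqP; rewrite eq_le (FB Ff) /=; rewrite leNgt; apply/negP => lt.
case: hF => fF FnB _; apply: FnB; exact: (face_lt1 NZ ND fF Ff lt).
Qed.

Lemma face_u G : is_face B G -> G u -> F `<=` G.
Proof.
move=> fG Gu; case: hu => _ [r r0 hr].
exact: (face_contains NZ ND FB fG Gu Fu r0 hr).
Qed.

Lemma Phi_max y : N y = 1 -> F `<=` Phi N y -> Phi N y = F.
Proof.
move=> hy sub; case: hF => _ _ hmax; apply: hmax => //.
- by apply: Phi_face; rewrite // hy.
- exact: Phi_proper.
Qed.

Lemma ext_B e : extreme_point B e -> N e <= 1.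
Proof. by case=> h _ _; apply: h. Qed.

Definition mid (e : V) := (1 - 1/2) *: u + 1/2 *: e.

Lemma half01 : 0 <= (1/2 : R) <= 1.
Proof. by apply/andP; split; lra. Qed.

Lemma mid_lt e : extreme_point B e -> ~ F e -> N (mid e) < 1.
Proof.
move=> ee nFe; have Ne := ext_B ee.
have Nu : N u <= 1 by rewrite F1 //; exact: Fu.
have hm : N (mid e) <= 1 by apply: Bconv => //; exact: half01.
rewrite lt_neqAle hm andbT; apply/negP => /eqP hm1; apply: nFe.
have sub : F `<=` Phi N (mid e).
  apply: face_u; first by apply: Phi_face; rewrite // hm.
  split => //; exists 1 => //.
  suff -> : mid e + 1 *: (mid e - u) = e by [].
  by apply/rowP => j; rewrite /mid !mxE; field.
rewrite -(Phi_max hm1 sub); split => //; exists 1 => //.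
suff -> : mid e + 1 *: (mid e - e) = u by [].
by apply/rowP => j; rewrite /mid !mxE; field.
Qed.

Lemma gap : exists2 g : R, 0 < g & forall e, extreme_point B e -> ~ F e -> N (mid e) <= 1 - g.
Proof.
have fin : finite_set [set e | extreme_point B e /\ ~ F e].
  by apply: (sub_finite_set _ pN) => e [].
have [g g0 hg] := @fin_gap _ _ _ (fun e => N (mid e)) fin (fun e '(conj h1 h2) => mid_lt h1 h2).
by exists g => // e h1 h2; apply: hg.
Qed.

Lemma SL : exists2 rho : R, 0 < rho & forall y, N y = 1 -> N (y - u) < rho -> F y.
Proof.
have [r r0 hr] : exists2 r : R, 0 < r & forall z, N (z - u) < r -> aff F z -> F z.
  by case: hu.
have [g0 g0p hg0] := gap.
pose g := Num.min g0 1.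
have gp : 0 < g by rewrite lt_min g0p ltr01.
have g1 : g <= 1 by rewrite ge_min lexx orbT.
have hg : forall e, extreme_point B e -> ~ F e -> N (mid e) <= 1 - g.
  by move=> e h1 h2; apply: le_trans (hg0 _ h1 h2) _; rewrite lerB // ge_min lexx.
have rg : 0 < r * g / 8 by rewrite divr_gt0 // mulr_gt0.
exists (Num.min g (r * g / 8)); first by rewrite lt_min gp rg.
move=> y Ny; rewrite lt_min => /andP[hyu1 hyu2].
have Ny1 : N y <= 1 by rewrite Ny.
have Nu : N u = 1 by apply: F1; exact: Fu.
have [s [hs1 hs2 hs3]] := KM N0x NZ ND Ny1.
pose P := fun q : R * V => `[< F q.2 >].
pose sF := filter P s; pose sN := filter (predC P) s.
have memF : forall q, q \in sF -> 0 <= q.1 /\ F q.2.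
  move=> q; rewrite mem_filter => /andP[/asboolP h qs]; split => //; by case: (hs1 q qs).
have memN : forall q, q \in sN -> 0 <= q.1 /\ (extreme_point B q.2 /\ ~ F q.2).
  move=> q; rewrite mem_filter => /andP[/asboolPn h qs]; case: (hs1 q qs) => h1 h2; by split.
pose L := \sum_(q <- sN) q.1; pose LF := \sum_(q <- sF) q.1.
have hL : LF + L = 1 by rewrite -hs2 (sum_split _ P).
have L0 : 0 <= L by rewrite /L big_seq; apply: sumr_ge0 => q /memN [].
have LF0 : 0 <= LF by rewrite /LF big_seq; apply: sumr_ge0 => q /memF [].
have hmid : mid y = \sum_(q <- s) q.1 *: mid q.2.
  by rewrite /mid sum_aff hs2 -hs3 mul1r ?mul1r.
have up : N (mid y) <= LF + L * (1 - g).
  rewrite hmid; apply: le_trans (@N_sum _ _ N ND NZ s xpredT _ _) _.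
    by move=> q /hs1 [].
  rewrite (sum_split _ P) -/sF -/sN; apply: lerD.
    rewrite /LF big_seq [X in _ <= X]big_seq; apply: ler_sum => q /memF [q0 Fq].
    rewrite -[X in _ <= X]mulr1; apply: ler_wpM2l => //.
    by apply: Bconv => //; [rewrite Nu | apply: FB | exact: half01].
  rewrite /L mulr_suml big_seq [X in _ <= X]big_seq; apply: ler_sum => q /memN [q0 [eq nFq]].
  by apply: ler_wpM2l => //; apply: hg.
have low : 1 - N (y - u) / 2 <= N (mid y).
  have := Nsub ND u (mid y).
  have -> : u - mid y = (1/2 : R) *: (u - y) by apply/rowP => j; rewrite /mid !mxE; field.
  rewrite (NZp NZ); last by rewrite divr_ge0.
  rewrite -(NB NZ y u) Nu; lra.
have hLg : L * g <= N (y - u) / 2.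
  have : LF + L * (1 - g) = LF + L - L * g by ring.
  lra.
have [L00|Lp] : L = 0 \/ 0 < L by move: L0; rewrite le_eqVlt => /orP[/eqP <-|]; [left|right].
- have zN : \sum_(q <- sN) q.1 *: q.2 = 0.
    rewrite big1_seq // => q /andP[_ qin].
    rewrite (psum_seq0 _ L00 qin) ?scale0r // => i /memN []. done.
  have LF1 : LF = 1 by rewrite -hL L00 addr0.
  have ey : y = LF^-1 *: \sum_(q <- sF) q.1 *: q.2.
    by rewrite LF1 invr1 scale1r hs3 (sum_split _ P) -/sN zN addr0.
  by rewrite ey; apply: (conv_seq Fconv memF); rewrite -/LF LF1 ltr01.
- have Lh : L < 1/2.
    have : L * g < 1/2 * g by lra.
    by rewrite ltr_pM2r.
  have LFp : 0 < LF by lra.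
  have LF1 : LF = 1 - L by lra.
  pose a := LF^-1 *: \sum_(q <- sF) q.1 *: q.2.
  pose b := L^-1 *: \sum_(q <- sN) q.1 *: q.2.
  have Fa : F a by apply: (conv_seq Fconv memF).
  have Bb : N b <= 1.
    apply: (conv_seq (C := B)) => //; first exact: ball_convex.
    by move=> q /memN [q0 [eq _]]; split => //; apply: ext_B.
  have ya : y = (1 - L) *: a + L *: b.
    rewrite {1}hs3 (sum_split _ P) /a /b LF1; apply: vec_split.
      by rewrite gt_eqF.
    by rewrite subr_eq0 eq_sym lt_eqF //; lra.
  have au : N (a - u) < r / 2.
    have e1 : (1 - L) *: (a - u) = (y - u) - L *: (b - u).
      by rewrite ya; apply/rowP => j; rewrite !mxE; ring.
    have h1 : (1 - L) * N (a - u) <= N (y - u) + L * 2.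
      rewrite -(NZp NZ) ?subr_ge0 ?(ltW (lt_trans Lh _)) //; last by lra.
      rewrite e1; apply: le_trans (ND _ _) _; rewrite (NN NZ) (NZp NZ) //.
      apply: lerD => //; apply: ler_wpM2l => //.
      apply: le_trans (ND _ _) _; rewrite (NN NZ) Nu; lra.
    have h2 : L <= N (y - u) / 2 / g by rewrite ler_pdivlMr.
    have h3 : N (y - u) / g < r / 8.
      by rewrite ltr_pdivrMr // (_ : r / 8 * g = r * g / 8) //; ring.
    have A0 := Nge0 NZ ND (a - u).
    have h4 : 0 <= (1/2 - L) * N (a - u) by apply: mulr_ge0 => //; lra.
    have h5 : N (y - u) < r / 8.
      have : r * g <= r * 1 := ler_wpM2l (ltW r0) g1.
      lra.
    lra.
  have hra : forall z, N (z - a) < r / 2 -> aff F z -> F z.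
    move=> z hz az; apply: hr az.
    have := ND (z - a) (a - u); rewrite addrA subrK; lra.
  have Pa : Phi N y a.
    split; first exact: FB Fa.
    exists ((1 - L) / L); first by rewrite divr_gt0 //; lra.
    suff -> : y + (1 - L) / L *: (y - a) = b by [].
    by rewrite ya; apply/rowP => j; rewrite !mxE; field; rewrite !gt_eqF.
  have sub := face_contains NZ ND FB (Phi_face NZ ND Ny1) Pa Fa (divr_gt0 r0 (ltr0Sn _ 1)) hra.
  by rewrite -(Phi_max Ny sub); exact: Phi_self.
Qed.

End SL.


Section XL.
Variables (R : realType) (n : nat).
Notation V := 'rV[R]_n.
Variables (N : V -> R) (N0x : forall x, N x = 0 -> x = 0)
  (NZ : forall (a : R) x, N (a *: x) = `|a| * N x)
  (ND : forall x y, N (x + y) <= N x + N y).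
Notation B := (unit_ball N).
Variables (F : set V) (hF : is_facet B F) (u : V) (hu : relint N F u).
Variables (rho : R) (rho0 : 0 < rho) (rho1 : rho <= 1)
  (hSL : forall y, N y = 1 -> N (y - u) < rho -> F y).

Let Nu : N u = 1. Proof. by apply: (F1 NZ ND hF); case: hu. Qed.

Definition K x := 0 < N x /\ N ((N x)^-1 *: x - u) < rho.

Lemma K_F x : K x -> F ((N x)^-1 *: x).
Proof.
move=> [h1 h2]; apply: hSL => //.
by rewrite (NZp NZ) ?mulVf ?gt_eqF // invr_ge0 ltW.
Qed.

Lemma K_add x x' : K x -> K x' -> K (x + x') /\ N (x + x') = N x + N x'.
Proof.
move=> [h1 h2] [h1' h2'].
pose S := N x + N x'; have S0 : 0 < S by rewrite addr_gt0.
pose l := N x' / S.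
have l01 : 0 <= l <= 1.
  apply/andP; split; first by rewrite divr_ge0 // ltW.
  by rewrite ler_pdivrMr // mul1r lerDr ltW.
pose z := (1 - l) *: ((N x)^-1 *: x) + l *: ((N x')^-1 *: x').
have Fz : F z by apply: (Fconv hF) => //; apply: K_F.
have Nz : N z = 1 by apply: (F1 NZ ND hF).
have ez : x + x' = S *: z.
  apply/rowP => j; rewrite /z /l /S !mxE; field.
  by rewrite !gt_eqF.
have NS : N (x + x') = S by rewrite ez (NZp NZ) ?Nz ?mulr1 // ltW.
split => //; split; first by rewrite NS.
rewrite NS ez scalerA mulVf ?gt_eqF // scale1r.
have -> : z - u = (1 - l) *: ((N x)^-1 *: x - u) + l *: ((N x')^-1 *: x' - u).
  by apply/rowP => j; rewrite /z !mxE; ring.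
apply: le_lt_trans (Nconv NZ ND _ _ l01) _.
case/andP: l01 => l0 l1.
have e1 : (1 - l) * N ((N x)^-1 *: x - u) <= (1 - l) * rho by rewrite ler_wpM2l ?subr_ge0 // ltW.
have [l0'|l0'] := eqVneq l 0.
  rewrite l0' subr0 mul1r mul0r addr0; exact: h2.
have e2 : l * N ((N x')^-1 *: x' - u) < l * rho.
  by rewrite ltr_pM2l // lt_neqAle eq_sym l0' l0.
lra.
Qed.

Lemma K_scale c x : 0 < c -> K x -> K (c *: x).
Proof.
move=> c0 [h1 h2]; rewrite /K (NZp NZ) ?ltW //; split; first by rewrite mulr_gt0.
by rewrite scalerA invfM mulrAC mulVf ?gt_eqF // mul1r.
Qed.

Lemma K_u : K u.
Proof. by split; rewrite Nu ?ltr01 // invr1 scale1r subrr N0. Qed.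

Lemma K_near M v : 0 < M -> N v <= M * (rho / 4) -> K (M *: u + v).
Proof.
move=> M0 hv.
have Nv0 := Nge0 NZ ND v.
pose W := N (M *: u + v).
have Mu : N (M *: u) = M by rewrite (NZp NZ) ?Nu ?mulr1 // ltW.
have Wup : W <= M + N v by rewrite -Mu; apply: ND.
have Wlo : M - N v <= W.
  have := Nsub ND (M *: u) (M *: u + v).
  have -> : M *: u - (M *: u + v) = - v by apply/rowP => j; rewrite !mxE; ring.
  rewrite (NN NZ) Mu -/W; lra.
have hMr : M * (rho / 4) <= M / 4.
  have : rho * 4^-1 <= 1 * 4^-1 by rewrite ler_pM2r // invr_gt0.
  by rewrite mul1r => h; rewrite ler_pM2l.
have W0 : 0 < W by lra.
split => //.
have -> : W^-1 *: (M *: u + v) - u = W^-1 *: ((M - W) *: u + v).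
  by apply/rowP => j; rewrite !mxE; field; rewrite gt_eqF.
rewrite (NZp NZ) ?invr_ge0 ?ltW //.
have h1 : N ((M - W) *: u + v) <= 2 * N v.
  apply: le_trans (ND _ _) _; rewrite NZ Nu mulr1.
  have : `|M - W| <= N v by rewrite ler_norml; apply/andP; split; lra.
  lra.
rewrite ltr_pdivrMl //.
have : M * (3 / 4) <= W by lra.
have hr : 2 * N v <= M * (rho / 2) by lra.
have hr2 : 2 * N v <= M * (rho / 2).
  have -> : M * (rho / 2) = 2 * (M * (rho / 4)) by field.
  by rewrite ler_pM2l.
have : rho * (M * (3/4)) <= rho * W by rewrite ler_pM2l //; lra.
have e3 : rho * (M * (3/4)) - M * (rho/2) = (M * rho) / 4 by field.
have : 0 < (M * rho) / 4 by rewrite divr_gt0 // mulr_gt0.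
rewrite [W * rho]mulrC.
lra.
Qed.

Definition Mof v := (N v + 1) * 4 / rho.

Lemma Mof_pos v : 0 < Mof v.
Proof. by rewrite /Mof divr_gt0 // mulr_gt0 // ltr_wpDl // Nge0. Qed.

Lemma K_Mof v : K (Mof v *: u + v).
Proof.
apply: K_near; first exact: Mof_pos.
rewrite /Mof; have -> : (N v + 1) * 4 / rho * (rho / 4) = N v + 1.
  by field; rewrite gt_eqF.
lra.
Qed.

Definition phi v := N (Mof v *: u + v) - Mof v.

Lemma phi_eq v M : 0 < M -> K (M *: u + v) -> phi v = N (M *: u + v) - M.
Proof.
move=> M0 hK; rewrite /phi.
have K1 := K_Mof v.
have KM0 : K (M *: u) by rewrite -[M *: u]addr0; apply: K_near => //; rewrite (N0 NZ); apply: mulr_ge0; [exact: ltW | rewrite divr_ge0 // ltW].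
have KM1 : K (Mof v *: u) by apply: K_scale; [exact: Mof_pos | exact: K_u].
have [_ e1] := K_add hK KM1.
have [_ e2] := K_add K1 KM0.
have e3 : M *: u + v + Mof v *: u = Mof v *: u + v + M *: u.
  by apply/rowP => j; rewrite !mxE; ring.
rewrite e3 e2 in e1.
have hM1 : N (M *: u) = M by rewrite (NZp NZ) ?Nu ?mulr1 // ltW.
have hM2 : N (Mof v *: u) = Mof v by rewrite (NZp NZ) ?Nu ?mulr1 // ltW // Mof_pos.
rewrite hM1 hM2 in e1; lra.
Qed.

Lemma phi_add v w : phi (v + w) = phi v + phi w.
Proof.
have [Ks es] := K_add (K_Mof v) (K_Mof w).
have e : Mof v *: u + v + (Mof w *: u + w) = (Mof v + Mof w) *: u + (v + w).
  by apply/rowP => j; rewrite !mxE; ring.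
rewrite e in Ks es.
rewrite (phi_eq (addr_gt0 (Mof_pos v) (Mof_pos w)) Ks) es /phi; ring.
Qed.

Lemma phi0 : phi 0 = 0.
Proof.
have h : K (1 *: u + 0) by rewrite scale1r addr0; exact: K_u.
by rewrite (phi_eq ltr01 h) scale1r addr0 Nu subrr.
Qed.

Lemma phiN v : phi (- v) = - phi v.
Proof. by apply/eqP; rewrite -addr_eq0 -phi_add addNr phi0. Qed.

Lemma phi_pos c v : 0 < c -> phi (c *: v) = c * phi v.
Proof.
move=> c0; have hK := K_scale c0 (K_Mof v).
have e : c *: (Mof v *: u + v) = (c * Mof v) *: u + c *: v.
  by rewrite scalerDr scalerA.
rewrite e in hK; rewrite (phi_eq (mulr_gt0 c0 (Mof_pos v)) hK) -e (NZp NZ) ?ltW //.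
by rewrite /phi mulrBr.
Qed.

Lemma phiZ c v : phi (c *: v) = c * phi v.
Proof.
have [c0|c0|->] := ltgtP c 0; last by rewrite scale0r phi0 mul0r.
- have -> : c *: v = - ((- c) *: v) by rewrite scaleNr opprK.
  by rewrite phiN phi_pos ?oppr_gt0 // mulNr opprK.
- exact: phi_pos.
Qed.

Lemma phi_lin c v w : phi (c *: v + w) = c * phi v + phi w.
Proof. by rewrite phi_add phiZ. Qed.

Lemma phi_le v : phi v <= N v.
Proof.
rewrite /phi; have := ND (Mof v *: u) v.
by rewrite (NZp NZ) ?Nu ?mulr1 ?(ltW (Mof_pos v)) //; lra.
Qed.

Lemma phi_F f : F f -> phi f = 1.
Proof.
move=> Ff; rewrite /phi; pose M := Mof f.
have M0 : 0 < M := Mof_pos f.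
have M10 : 0 < M + 1 by rewrite addr_gt0.
pose z := (1 - (M + 1)^-1) *: u + (M + 1)^-1 *: f.
have Fz : F z.
  apply: (Fconv hF) => //; first by case: hu.
  apply/andP; split; first by rewrite invr_ge0 ltW.
  by rewrite invf_le1 // lerDr ltW.
have e : M *: u + f = (M + 1) *: z.
  by apply/rowP => j; rewrite /z !mxE; field; rewrite gt_eqF.
rewrite -/M e (NZp NZ) ?ltW // (F1 NZ ND hF Fz); ring.
Qed.

Lemma phi_near x : phi x = 1 -> N (x - u) < rho / 4 -> F x.
Proof.
move=> px hx.
have Kx : K x.
  have := @K_near 1 (x - u) ltr01.
  have -> : 1 *: u + (x - u) = x by apply/rowP => j; rewrite !mxE; ring.
  by rewrite mul1r; apply; exact: ltW.
have K3 : K (3 *: u + x).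
  have := @K_near 4 (x - u) (ltr0Sn _ 3).
  have -> : 4 *: u + (x - u) = 3 *: u + x by apply/rowP => j; rewrite !mxE; ring.
  apply; have : 0 < rho by []; lra.
have K3u : K (3 *: u) by apply: K_scale => //; exact: K_u.
have [_ e] := K_add K3u Kx.
have N3 : N (3 *: u) = 3 by rewrite (NZp NZ) // Nu mulr1.
have Nx : N x = 1.
  by move: px; rewrite (phi_eq (ltr0Sn _ 2) K3) e N3 => h; lra.
by have := K_F Kx; rewrite Nx invr1 scale1r.
Qed.

End XL.


Lemma XL (R : realType) (n : nat) (N : 'rV[R]_n -> R) (N0x : forall x, N x = 0 -> x = 0)
  (NZ : forall (a : R) x, N (a *: x) = `|a| * N x)
  (ND : forall x y, N (x + y) <= N x + N y) (pN : polyhedral N)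
  (F : set 'rV[R]_n) (hF : is_facet (unit_ball N) F) (u : 'rV[R]_n) (hu : relint N F u) :
  exists phi : 'rV[R]_n -> R, [/\ forall c v w, phi (c *: v + w) = c * phi v + phi w,
    forall v, phi v <= N v, forall f, F f -> phi f = 1 &
    exists2 r : R, 0 < r & forall x, phi x = 1 -> N (x - u) < r -> F x].
Proof.
have [rho0 rho0p hSL] := SL N0x NZ ND pN hF hu.
pose rho := Num.min rho0 1.
have rp : 0 < rho by rewrite lt_min rho0p ltr01.
have r1 : rho <= 1 by rewrite ge_min lexx orbT.
have hSL' : forall y, N y = 1 -> N (y - u) < rho -> F y.
  move=> y h1 h2; apply: hSL => //; apply: lt_le_trans h2 _; rewrite ge_min lexx //.
exists (phi N u rho); split.
- exact: (phi_lin NZ ND hF hu rp r1 hSL').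
- exact: (phi_le NZ ND hF hu rp).
- by move=> f Ff; apply: (phi_F NZ ND hF hu rp).
- exists (rho / 4); first by rewrite divr_gt0.
  by move=> x h1 h2; apply: (phi_near NZ ND hF hu rp r1 hSL').
Qed.

Lemma lin_sum_ord (R : realType) (n : nat) (h : 'rV[R]_n -> R)
  (hl : forall a v w, h (a *: v + w) = a * h v + h w) m (c : 'I_m -> R) (p : 'I_m -> 'rV[R]_n) :
  h (\sum_(i < m) c i *: p i) = \sum_(i < m) c i * h (p i).
Proof.
have h0 : h 0 = 0 by have := hl (-1) 0 0; rewrite scaler0 addr0 mulN1r addNr.
apply: (big_ind2 (fun x y => h x = y)) => //.
- by move=> a1 a2 b1 b2 e1 e2; rewrite -[a1]scale1r hl e1 e2 mul1r.
- by move=> i _; rewrite -[_ *: _]addr0 hl h0 addr0.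
Qed.

Section Main.
Variables (R : realType) (n : nat).
Notation V := 'rV[R]_n.
Variables (NX NY : V -> R)
  (N0x : forall x, NX x = 0 -> x = 0) (NZx : forall (a : R) x, NX (a *: x) = `|a| * NX x)
  (NDx : forall x y, NX (x + y) <= NX x + NX y)
  (N0y : forall x, NY x = 0 -> x = 0) (NZy : forall (a : R) x, NY (a *: x) = `|a| * NY x)
  (NDy : forall x y, NY (x + y) <= NY x + NY y) (pY : polyhedral NY)
  (F : set V) (hF : is_facet (unit_ball NX) F)
  (T : {linear V -> V}) (Ti : V -> V) (TK : cancel T Ti) (KT : cancel Ti T)
  (hpres : forall x, relint NX F x -> preserves_bj_at NX NY T x)
  (u : V) (hu : relint NX F u)
  (phi : V -> R) (phil : forall c v w, phi (c *: v + w) = c * phi v + phi w)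
  (phile : forall v, phi v <= NX v) (phiF : forall f, F f -> phi f = 1)
  (r : R) (r0 : 0 < r) (phin : forall x, phi x = 1 -> NX (x - u) < r -> F x).

Lemma Ti_lin a v w : Ti (a *: v + w) = a *: Ti v + Ti w.
Proof. by apply: (can_inj TK); rewrite KT linearD linearZ !KT. Qed.

Lemma Ti0 : Ti 0 = 0.
Proof. by apply: (can_inj TK); rewrite KT linear0. Qed.

Lemma TiZ a v : Ti (a *: v) = a *: Ti v.
Proof. by rewrite -[a *: v]addr0 Ti_lin Ti0 addr0. Qed.

Lemma TiB v w : Ti (v - w) = Ti v - Ti w.
Proof. by rewrite -scaleN1r addrC Ti_lin scaleN1r addrC. Qed.

Lemma phi0m : phi 0 = 0.
Proof. by have := phil (-1) 0 0; rewrite scaler0 addr0 mulN1r addNr. Qed.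

Lemma phiZm a v : phi (a *: v) = a * phi v.
Proof. by rewrite -[a *: v]addr0 phil phi0m addr0. Qed.

Lemma phiB v w : phi (v - w) = phi v - phi w.
Proof. by rewrite -scaleN1r addrC phil mulN1r addrC. Qed.

Lemma Ti_sum (s : seq (R * V)) : Ti (\sum_(q <- s) q.1 *: q.2) = \sum_(q <- s) q.1 *: Ti q.2.
Proof. by elim: s => [|q s IH]; rewrite ?big_nil ?Ti0 // !big_cons Ti_lin IH. Qed.

Lemma Cbound : exists2 Cb : R, 0 < Cb & forall v, NX (Ti v) <= Cb * NY v.
Proof.
have [C0 hC0] := fin_bound (fun e => NX (Ti e)) pY.
exists (Num.max C0 1); first by rewrite lt_max ltr01 orbT.
move=> v; have [->|vn0] := eqVneq v 0.
  by rewrite Ti0 (N0 NZx) (N0 NZy) mulr0.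
have Nv := Ngt0 N0y NZy NDy vn0.
pose w := (NY v)^-1 *: v.
have Nw : NY w <= 1.
  rewrite /w (NZp NZy); last by rewrite invr_ge0 ltW.
  by rewrite mulVf ?gt_eqF.
have [s [hs1 hs2 hs3]] := KM N0y NZy NDy Nw.
have hw : NX (Ti w) <= Num.max C0 1.
  rewrite hs3 Ti_sum; apply: le_trans (@N_sum _ _ NX NDx NZx s xpredT _ _) _.
    by move=> q /hs1 [].
  rewrite -[X in _ <= X]mul1r -hs2 mulr_suml big_seq [X in _ <= X]big_seq.
  apply: ler_sum => q qs; have [q0 eq] := hs1 q qs; apply: ler_wpM2l => //.
  by apply: le_trans (hC0 _ eq) _; rewrite le_max lexx.
have ev : v = NY v *: w by rewrite /w scalerA mulfV ?gt_eqF // scale1r.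
rewrite {1}ev TiZ (NZp NZx); last exact: ltW.
by rewrite mulrC ler_pM2r.
Qed.

Lemma aff_phi y : phi y = 1 -> aff F y.
Proof.
move=> py.
pose t := r / (2 * (NX (y - u) + 1)).
have hN := Nge0 NZx NDx (y - u).
have t0 : 0 < t by rewrite divr_gt0 // mulr_gt0 // ltr_wpDl.
have Fum : F u by case: hu.
pose y2 := u + t *: (y - u).
have Fy2 : F y2.
  apply: phin.
    by rewrite /y2 addrC phil phiB py (phiF Fum) subrr mulr0 add0r.
  rewrite /y2 addrC addKr (NZp NZx); last exact: ltW.
  have N1 : 0 < NX (y - u) + 1 by rewrite ltr_wpDl.
  have e1 : t * NX (y - u) = r / 2 * (NX (y - u) / (NX (y - u) + 1)).
    by rewrite /t; field; rewrite gt_eqF.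
  have e2 : NX (y - u) / (NX (y - u) + 1) < 1 by rewrite ltr_pdivrMr // mul1r ltrDl.
  have e3 : r / 2 * (NX (y - u) / (NX (y - u) + 1)) < r / 2 * 1 by rewrite ltr_pM2l // divr_gt0.
  rewrite e1; apply: (lt_trans e3); rewrite mulr1 ltr_pdivrMr // mulr_natr mulr2n ltrDr //.
exists 2%N, [ffun i : 'I_2 => if i == ord0 then 1 - t^-1 else t^-1],
    [ffun i : 'I_2 => if i == ord0 then u else y2]; split.
- by move=> i; rewrite ffunE; case: ifP.
- by rewrite big_ord_recr big_ord1 /= !ffunE /=; ring.
- rewrite big_ord_recr big_ord1 /= !ffunE /=.
  by apply/rowP => j; rewrite /y2 !mxE; field; rewrite gt_eqF.
Qed.

Lemma Fum : F u. Proof. by case: hu. Qed.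

Lemma bjF x d : F x -> phi d = 0 -> bj_orth NX x d.
Proof.
move=> Fx pd l; rewrite (F1 NZx NDx hF Fx).
by apply: le_trans (phile _); rewrite addrC phil pd mulr0 add0r phiF.
Qed.

Definition c := NY (T u).

Lemma c_pos : 0 < c.
Proof.
apply: (Ngt0 N0y NZy NDy); apply/negP => /eqP h.
have : Ti (T u) = Ti 0 by rewrite h.
rewrite TK Ti0 => hu0.
have := F1 NZx NDx hF Fum; rewrite hu0 (N0 NZx) => /eqP; rewrite eq_sym oner_eq0.
done.
Qed.

Lemma Tnorm x : relint NX F x -> NY (T x) = c.
Proof.
move=> hx; have Fx : F x by case: hx.
have p0 : forall a b, F a -> F b -> phi (a - b) = 0.
  by move=> a b Fa Fb; rewrite phiB !phiF // subrr.
have h1 := hpres hx (bjF Fx (p0 _ _ Fum Fx)) 1.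
have h2 := hpres hu (bjF Fum (p0 _ _ Fx Fum)) 1.
rewrite scale1r linearB addrC subrK in h1.
rewrite scale1r linearB addrC subrK in h2.
by apply/eqP; rewrite eq_le h1 h2.
Qed.

Definition g v := c * phi (Ti v).

Lemma g_lin a v w : g (a *: v + w) = a * g v + g w.
Proof. by rewrite /g Ti_lin phil; ring. Qed.

Lemma g0 : g 0 = 0. Proof. by rewrite /g Ti0 phi0m mulr0. Qed.
Lemma gZ a v : g (a *: v) = a * g v.
Proof. by rewrite -[a *: v]addr0 g_lin g0 addr0. Qed.
Lemma gB v w : g (v - w) = g v - g w.
Proof. by rewrite -scaleN1r addrC g_lin mulN1r addrC. Qed.

Lemma g_le v : g v <= NY v.
Proof.
rewrite /g; pose s := phi (Ti v).
have [s0|sp] := lerP s 0.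
  by apply: le_trans (Nge0 NZy NDy v); rewrite pmulr_rle0 // c_pos.
pose x0 := s^-1 *: Ti v.
have px0 : phi x0 = 1 by rewrite /x0 phiZm mulVf // gt_eqF.
have h := hpres hu (bjF Fum (_ : phi (x0 - u) = 0)) 1.
rewrite phiB px0 (phiF Fum) subrr in h; have := h erefl.
rewrite scale1r linearB addrC subrK /x0 linearZ KT (NZp NZy); last by rewrite invr_ge0 ltW.
rewrite -/c => h'.
have : s * c <= s * (s^-1 * NY v) by rewrite ler_pM2l.
by rewrite mulrA mulfV ?gt_eqF // mul1r mulrC.
Qed.

Definition G := [set z | NY z <= 1 /\ g z = 1].

Lemma G_face : is_face (unit_ball NY) G.
Proof.
split; first by move=> z [].
- move=> a b t [ha ga] [hb gb] ht; split; first exact: (Bconv NZy NDy).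
  by rewrite g_lin gZ ga gb; ring.
- move=> a b t ha hb /andP[t0 t1] [_ gz].
  have ga := le_trans (g_le a) ha; have gb := le_trans (g_le b) hb.
  rewrite g_lin gZ in gz.
  have e1 : 0 <= (1 - t) * (1 - g a) by apply: mulr_ge0; lra.
  have e2 : 0 <= t * (1 - g b) by apply: mulr_ge0; lra.
  have e3 : (1 - t) * (1 - g a) + t * (1 - g b) = 0.
    have -> : (1 - t) * (1 - g a) + t * (1 - g b) = 1 - ((1 - t) * g a + t * g b) by ring.
    by rewrite gz subrr.
  have z1 : (1 - t) * (1 - g a) = 0 by lra.
  have z2 : t * (1 - g b) = 0 by lra.
  have ga1 : g a = 1 by move/eqP: z1; rewrite mulf_eq0 => /orP[/eqP h|/eqP h]; lra.
  have gb1 : g b = 1 by move/eqP: z2; rewrite mulf_eq0 => /orP[/eqP h|/eqP h]; lra.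
  by split; split.
Qed.

Lemma Open x : relint NX F x ->
  exists2 e : R, 0 < e & forall z, g z = 1 -> NY (z - c^-1 *: T x) < e -> G z.
Proof.
move=> hx; have [Fx [ex ex0 hex]] := hx.
have [Cb Cb0 hCb] := Cbound.
have cp := c_pos.
exists (ex / (2 * (Cb * c))); first by rewrite divr_gt0 // !mulr_gt0.
move=> z gz hz.
pose x' := Ti (c *: z).
have px' : phi x' = 1 by rewrite /x' TiZ phiZm; move: gz; rewrite /g.
have ex' : x' - x = Ti (c *: (z - c^-1 *: T x)).
  by rewrite scalerBr scalerA mulfV ?gt_eqF // scale1r TiB TK.
have dx : NX (x' - x) < ex / 2.
  rewrite ex'; apply: le_lt_trans (hCb _) _.
  rewrite (NZp NZy); last exact: ltW.
  have h1 : (Cb * c) * NY (z - c^-1 *: T x) < (Cb * c) * (ex / (2 * (Cb * c))).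
    by rewrite ltr_pM2l // mulr_gt0.
  have e1 : (Cb * c) * (ex / (2 * (Cb * c))) = ex / 2.
    by field; rewrite !gt_eqF.
  by rewrite e1 -mulrA in h1.
have Fx' : F x' by apply: hex; [lra | exact: aff_phi].
have rx' : relint NX F x'.
  split => //; exists (ex / 2); first by rewrite divr_gt0.
  move=> y hy ay; apply: hex ay.
  have := NDx (y - x') (x' - x); rewrite addrA subrK; lra.
have Tx' : T x' = c *: z by rewrite /x' KT.
have := Tnorm rx'; rewrite Tx' (NZp NZy) ?ltW // => h.
split => //; rewrite (_ : NY z = 1) //.
have cn0 : c != 0 by rewrite gt_eqF.
by apply: (mulfI cn0); rewrite h mulr1.
Qed.

Lemma yG x : relint NX F x -> G (c^-1 *: T x).
Proof.
move=> hx; have Fx : F x by case: hx.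
have cp := c_pos.
split.
  by rewrite (NZp NZy) ?Tnorm // ?mulVf ?gt_eqF // invr_ge0 ltW.
by rewrite gZ /g TK phiF // mulrA mulVf ?gt_eqF // mulr1.
Qed.

Lemma aff_g z : aff G z -> g z = 1.
Proof.
move=> [m [cc [p [hp hs ->]]]]; rewrite (lin_sum_ord g_lin) -hs.
by apply: eq_bigr => i _; case: (hp i) => _ ->; rewrite mulr1.
Qed.

Lemma G_relint x : relint NX F x -> relint NY G (c^-1 *: T x).
Proof.
move=> hx; split; first exact: yG.
have [e e0 he] := Open hx.
by exists e => // z hz az; apply: he => //; exact: aff_g.
Qed.

Lemma G_facet : is_facet (unit_ball NY) G.
Proof.
have cp := c_pos.
split; first exact: G_face.
  move=> hG; have : unit_ball NY 0 by rewrite /unit_ball /= (N0 NZy).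
  rewrite -hG => -[_]; rewrite g0 => /eqP; rewrite eq_sym oner_eq0. done.
move=> F' hF' F'nB sub; apply/seteqP; split => // z F'z.
have Bz : NY z <= 1 by case: hF' => h _ _; apply: h.
apply/not_notP => nGz.
pose sig := g z.
have s1 : sig <= 1 := le_trans (g_le z) Bz.
have sn1 : sig != 1 by apply/negP => /eqP h; apply: nGz; split.
have slt : sig < 1 by rewrite lt_neqAle sn1 s1.
have sge : -1 <= sig.
  have h := g_le (-1 *: z); rewrite gZ mulN1r scaleN1r (NN NZy) in h.
  rewrite /sig; lra.
have Gyu := yG hu.
pose yu := c^-1 *: T u.
have NYu : NY yu = 1.
  by rewrite /yu (NZp NZy) ?invr_ge0 ?(ltW cp) // -/c mulVf ?gt_eqF.
have gyu : g yu = 1 by case: Gyu.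
have [e e0 he] := Open hu.
pose D := NY (z - sig *: yu).
have D0 : 0 <= D := Nge0 NZy NDy _.
pose k := Num.min 1 (e / (2 * (D + 1))).
have D1 : 0 < D + 1 by rewrite ltr_wpDl.
have k0 : 0 < k by rewrite lt_min ltr01 divr_gt0 // mulr_gt0.
have k1 : k <= 1 by rewrite ge_min lexx.
have kD : k * D < e.
  have h1 : k <= e / (2 * (D + 1)) by rewrite ge_min lexx orbT.
  have h2 : k * D <= e / (2 * (D + 1)) * D by rewrite ler_wpM2r.
  have e1 : e / (2 * (D + 1)) * D = e * (D / (2 * (D + 1))) by field; rewrite gt_eqF.
  have h3 : D / (2 * (D + 1)) < 1.
    rewrite ltr_pdivrMr ?mulr_gt0 // mul1r; lra.
  have h4 : e * (D / (2 * (D + 1))) < e * 1 by rewrite ltr_pM2l.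
  lra.
pose q := (1 + k * sig) *: yu - k *: z.
have gq : g q = 1.
  by rewrite /q gB gZ [g (k *: z)]gZ gyu -/sig; ring.
have hq : NY (q - c^-1 *: T u) < e.
  have -> : q - c^-1 *: T u = (- k) *: (z - sig *: yu).
    by apply/rowP => j; rewrite /q /yu !mxE; ring.
  by rewrite NZy normrN gtr0_norm.
have F'q : F' q by apply: sub; apply: he.
pose beta := k / (1 + k).
have k1p : 0 < 1 + k by rewrite addr_gt0.
have hb : 0 <= beta <= 1.
  apply/andP; split; first by rewrite divr_ge0 // ltW.
  by rewrite ler_pdivrMr // mul1r lerDr ltW.
have F'p : F' ((1 - beta) *: q + beta *: z) by case: hF' => _ cvx _; apply: cvx.
have ep : (1 - beta) *: q + beta *: z = ((1 + k * sig) / (1 + k)) *: yu.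
  by apply/rowP => j; rewrite /q /beta !mxE; field; rewrite !gt_eqF.
rewrite ep in F'p.
have ks : 0 <= 1 + k * sig.
  have : 0 <= k * (sig + 1) by apply: mulr_ge0; [exact: ltW | lra].
  have -> : k * (sig + 1) = k * sig + k by ring.
  lra.
have hlt : NY (((1 + k * sig) / (1 + k)) *: yu) < 1.
  rewrite (NZp NZy) ?divr_ge0 ?(ltW k1p) // NYu mulr1 ltr_pdivrMr // mul1r.
  have : k * sig < k * 1 by rewrite ltr_pM2l.
  lra.
by apply: F'nB; apply: (face_lt1 NZy NDy hF' F'p hlt).
Qed.

End Main.

Theorem mainTheorem16 (R : realType) (n : nat) (NX NY : 'rV[R]_n -> R)
  (hNX : is_norm NX) (hNY : is_norm NY)
  (pX : polyhedral NX) (pY : polyhedral NY)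
  (F : set 'rV[R]_n) (hF : is_facet (unit_ball NX) F)
  (T : {linear 'rV[R]_n -> 'rV[R]_n}) (hT : bijective T)
  (hpres : forall x, relint NX F x -> preserves_bj_at NX NY T x)
  (u : 'rV[R]_n) (hu : relint NX F u) :
  exists G : set 'rV[R]_n, is_facet (unit_ball NY) G /\
    (forall x, relint NX F x -> relint NY G ((NY (T u))^-1 *: T x)).
Proof.
case: hNX => N0x NZx NDx; case: hNY => N0y NZy NDy.
have [Ti TK KT] := hT.
have [phi [phil phile phiF [r r0 phin]]] := XL N0x NZx NDx pX hF hu.
exists (G NY T Ti u phi); split.
- exact: (G_facet NZx NDx N0y NZy NDy pY hF TK KT hpres hu phil phile phiF r0 phin).
- by move=> x hx; apply: (G_relint NZx NDx N0y NZy NDy pY hF TK KT hpres hu phil phile phiF r0 phin hx).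
Qed.
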